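(* Let $\mathcal{X}$ be a measurable space, $\mathcal{G}$ a class of measurable classifiers $g:\mathcal{X}\to\{-1,+1\}$, and $p\in(0,1)$ a given number. Let $(X'_1,Y'_1),\ldots,(X'_n,Y'_n)$ be i.i.d. copies of a pair $(X',Y')\in\mathcal{X}\times\{-1,+1\}$ with $q=\mathbb{P}\{Y'=+1\}$. Let $\varepsilon\in(0,1/2)$ and suppose $q\in(\varepsilon,1-\varepsilon)$. Let $n'_+=\sum_{i=1}^n\mathbb{I}\{Y'_i=+1\}$, $n'_-=n-n'_+$, and define for $g\in\mathcal{G}$ $$\widetilde{\mathcal{R}}_{w^*,n}(g)=\frac{2p}{q}\frac{1}{n}\sum_{i:Y'_i=+1}\mathbb{I}\{g(X'_i)=-1\}+\frac{1}{1-q}\frac{1}{n}\sum_{i:Y'_i=-1}\mathbb{I}\{g(X'_i)=+1\},$$ $$\widetilde{\mathcal{R}}_{\widehat{w}^*,n}(g)=\frac{2p}{n'_+}\sum_{i:Y'_i=+1}\mathbb{I}\{g(X'_i)=-1\}+\frac{1}{n'_-}\sum_{i:Y'_i=-1}\mathbb{I}\{g(X'_i)=+1\}.$$ Then for any $\delta\in(0,1)$, as soon as $n\ge 2\log(2/\delta)/\varepsilon^2$, with probability larger than $1-\delta$, $$\sup_{g\in\mathcal{G}}\left|\widetilde{\mathcal{R}}_{\widehat{w}^*,n}(g)-\widetilde{\mathcal{R}}_{w^*,n}(g)\right|\le\frac{2(2p+1)}{\varepsilon^2}\sqrt{\frac{\log(2/\delta)}{2n}}.$$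
   Context: $\mathbb{I}\{\cdot\}$ denotes the indicator function. In the paper's application, $Y'=+1$ marks positive examples and $Y'=-1$ marks unlabeled examples. *)

(* Defs.v *)
From HB Require Import structures.
From mathcomp Require Import all_boot all_order all_algebra.
From mathcomp Require Import all_classical all_reals all_analysis.
Set Implicit Arguments. Unset Strict Implicit. Unset Printing Implicit Defensive.
Import Order.TTheory GRing.Theory Num.Theory.
Local Open Scope classical_set_scope.
Local Open Scope ring_scope.

(* Mutual independence of a finite family of random elements Z_0..Z_{n-1}
   with values in a measurable space U: the product rule holds for every
   choice of measurable sets (taking B_i = setT gives all subfamilies). *)
Definition mutually_independent {d} {T : measurableType d} {R : realType}
  (P : probability T R) {d'} {U : measurableType d'} (n : nat)
  (Z : 'I_n -> T -> U) : Prop :=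
  forall B : 'I_n -> set U, (forall i, measurable (B i)) ->
    fine (P (\bigcap_(i in [set: 'I_n]) (Z i @^-1` B i)))
    = \prod_(i < n) fine (P (Z i @^-1` B i)).

Definition same_law {d} {T : measurableType d} {R : realType}
  (P : probability T R) {d'} {U : measurableType d'} (Z W : T -> U) : Prop :=
  forall B : set U, measurable B -> P (Z @^-1` B) = P (W @^-1` B).

Definition Spos {X : Type} {R : realType} (n : nat) (Xs : 'I_n -> X)
  (Ys : 'I_n -> R) (g : X -> R) : R :=
  \sum_(i < n | Ys i == 1) (g (Xs i) == -1)%:R.

Definition Sneg {X : Type} {R : realType} (n : nat) (Xs : 'I_n -> X)
  (Ys : 'I_n -> R) (g : X -> R) : R :=
  \sum_(i < n | Ys i == -1) (g (Xs i) == 1)%:R.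

Definition npos {R : realType} (n : nat) (Ys : 'I_n -> R) : R :=
  \sum_(i < n | Ys i == 1) 1.

Definition nneg {R : realType} (n : nat) (Ys : 'I_n -> R) : R :=
  n%:R - npos Ys.

Definition Rtilde_w {X : Type} {R : realType} (p q : R) (n : nat)
  (Xs : 'I_n -> X) (Ys : 'I_n -> R) (g : X -> R) : R :=
  2 * p / q * (1 / n%:R) * Spos Xs Ys g
  + 1 / (1 - q) * (1 / n%:R) * Sneg Xs Ys g.

Definition Rtilde_what {X : Type} {R : realType} (p : R) (n : nat)
  (Xs : 'I_n -> X) (Ys : 'I_n -> R) (g : X -> R) : R :=
  2 * p / npos Ys * Spos Xs Ys g + 1 / nneg Ys * Sneg Xs Ys g.

(* Main.v *)
Require Import Defs.
From HB Require Import structures.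
From mathcomp Require Import all_boot all_order all_algebra.
From mathcomp Require Import all_classical all_reals all_analysis.
From mathcomp Require Import ring lra.
Import Order.TTheory GRing.Theory Num.Theory.
Local Open Scope classical_set_scope.
Local Open Scope ring_scope.
Section Tail.
Variable R : realType.

Lemma expR_le_quad (x : R) : 0 <= x <= 1/2 -> expR x <= 1 + x + 2 * x ^+ 2.
Proof.
move=> /andP[x0 x1].
have h1 : 1 - x <= expR (- x) by have := expR_ge1Dx (- x).
have hE : expR x * (1 - x) <= 1.
  rewrite -[X in _ <= X](expRxMexpNx_1 x); apply: ler_wpM2l; [exact: expR_ge0|exact: h1].
have hp := expR_gt0 x.
nra.
Qed.

Variable n : nat.
Definition wt (r : R) (c : bool) (b : {ffun 'I_n -> bool}) : R :=
  \prod_i (if b i == c then r else 1 - r).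
Definition cnt (c : bool) (b : {ffun 'I_n -> bool}) : R :=
  \sum_i ((b i == c)%:R : R).

Lemma wt_ge0 r c b : 0 <= r <= 1 -> 0 <= wt r c b.
Proof.
move=> /andP[r0 r1]; apply: prodr_ge0 => i _; case: ifP => _ //; lra.
Qed.

Lemma tail (r s : R) c : 0 <= r <= 1 -> 0 <= s <= 2 ->
  \sum_(b | n%:R * r + n%:R * s < cnt c b) wt r c b
  <= expR (- (n%:R * s ^+ 2 / 8)).
Proof.
move=> hr /andP[s0 s2].
set l := s / 4.
set m := n%:R * r + n%:R * s.
have l0 : 0 <= l by rewrite /l; lra.
have hl : l <= 1/2 by rewrite /l; lra.
have step1 : \sum_(b | m < cnt c b) wt r c b <=
    \sum_b wt r c b * expR (l * (cnt c b - m)).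
  rewrite [X in _ <= X](bigID (fun b => m < cnt c b)) /=.
  rewrite -[X in X <= _]addr0; apply: lerD; last first.
    by apply: sumr_ge0 => b _; apply: mulr_ge0; [exact: wt_ge0|exact: expR_ge0].
  apply: ler_sum => b hb.
  rewrite -[X in X <= _]mulr1; apply: ler_wpM2l; first exact: wt_ge0.
  rewrite -expR0 ler_expR; apply: mulr_ge0 => //; rewrite subr_ge0; exact: ltW.
apply: le_trans step1 _.
have step2 : \sum_b wt r c b * expR (l * (cnt c b - m)) =
    expR (- (l * m)) * \sum_(b : {ffun 'I_n -> bool})
       \prod_i (if b i == c then r * expR l else 1 - r).
  rewrite mulr_sumr; apply: eq_bigr => b _.
  rewrite mulrBr expRD mulrA [RHS]mulrC; congr (_ * _).
  rewrite /cnt mulr_sumr expR_sum /wt -big_split /=; apply: eq_bigr => i _.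
  by case: (b i == c); rewrite ?mulr1 ?mulr0 ?expR0 ?mulr1.
rewrite step2 -(bigA_distr_bigA (fun i (j : bool) => if j == c then r * expR l else 1 - r)) /=.
have ha : forall i : 'I_n, \sum_(j : bool) (if j == c then r * expR l else 1 - r) = 1 - r + r * expR l.
  by move=> i; clear step2; case: c; rewrite big_bool /=; ring.
rewrite (eq_bigr (fun _ => 1 - r + r * expR l)); last by move=> i _; exact: ha.
rewrite big_const_ord iter_mulr_1.
clear step2 ha.
set a := 1 - r + r * expR l.
have ha2 : a <= expR (r * l + 2 * l ^+ 2).
  apply: le_trans (expR_ge1Dx _).
  have := expR_le_quad l; rewrite l0 hl => /(_ isT) he.
  move: hr => /andP[r0 r1].
  rewrite /a; nra.
have a0 : 0 <= a.
  move: hr => /andP[r0 r1]; have := expR_ge0 l; rewrite /a; nra.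
have ha3 : a ^+ n <= expR (r * l + 2 * l ^+ 2) ^+ n.
  by rewrite lerXn2r // ?nnegrE ?expR_ge0.
apply: le_trans (ler_wpM2l (expR_ge0 _) ha3) _.
rewrite -expRM_natl -expRD ler_expR /l /m.
rewrite le_eqVlt; apply/orP; left; apply/eqP; field; by [].
Qed.
Lemma cnt_ge0 c b : 0 <= cnt c b.
Proof. by apply: sumr_ge0 => i _; exact: ler0n. Qed.

Lemma cnt_le c b : cnt c b <= n%:R.
Proof.
have -> : n%:R = \sum_(i < n) (1 : R) by rewrite big_const_ord iter_addr_0.
by rewrite /cnt; apply: ler_sum => i _; case: (b i == c).
Qed.

Lemma cnt_false b : cnt false b = n%:R - cnt true b.
Proof.
rewrite /cnt -[in RHS](iter_addr_0 n 1) -big_const_ord -sumrB.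
by apply: eq_bigr => i _; case: (b i); rewrite /= ?subrr ?subr0.
Qed.

Lemma wt_swap r b : wt r true b = wt (1 - r) false b.
Proof. by apply: eq_bigr => i _; case: (b i) => //=; ring. Qed.
End Tail.

Lemma term_bound (R : realType) (a S N nn r e s : R) :
  0 <= a -> 0 <= S -> S <= N -> 0 < nn -> 0 < e -> e <= r ->
  `|N - nn * r| <= nn * s ->
  `|a / N * S - a / r * (1 / nn) * S| <= a * s / e.
Proof.
move=> a0 S0 SN nn0 e0 er hd.
have r0 : 0 < r by apply: lt_le_trans er.
have s0 : 0 <= s.
  have := normr_ge0 (N - nn * r) => h.
  have : 0 <= nn * s by apply: le_trans hd.
  by rewrite pmulr_rge0.
have hse : 0 <= s / e by apply: divr_ge0 => //; exact: ltW.
have [N0|Npos] := eqVneq N 0.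
  have S00 : S = 0 by apply/eqP; rewrite eq_le S0 andbT -N0.
  rewrite S00 !mulr0 subr0 normr0; apply: divr_ge0; [exact: mulr_ge0|exact: ltW].
have N0 : 0 < N by rewrite lt_def Npos /= (le_trans S0 SN).
have -> : a / N * S - a / r * (1 / nn) * S = (a * (S / N)) * ((nn * r - N) / (nn * r)).
  by field; rewrite Npos /= gt_eqF // gt_eqF.
rewrite normrM (ger0_norm (mulr_ge0 a0 (divr_ge0 S0 (ltW N0)))).
rewrite normrM normfV (ger0_norm (ltW (mulr_gt0 nn0 r0))) distrC.
have hSN : S / N <= 1 by rewrite ler_pdivrMr // mul1r.
have hd2 : `|N - nn * r| / (nn * r) <= s / e.
  rewrite ler_pdivrMr ?mulr_gt0 //.
  have h1 : s / e * nn * e = nn * s by field; rewrite gt_eqF.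
  have h2 : 0 <= s / e * nn * (r - e) by apply: mulr_ge0; [apply: mulr_ge0 => //; exact: ltW| lra].
  lra.
have := normr_ge0 (N - nn * r) => hn.
have hq : 0 <= `|N - nn * r| / (nn * r) by apply: divr_ge0 => //; apply: ltW; exact: mulr_gt0.
rewrite -mulrA -(mulrA a s); apply: ler_wpM2l => //.
have hS0 : 0 <= S / N by apply: divr_ge0 => //; exact: ltW.
have h3 : 0 <= (1 - S / N) * (`|N - nn * r| / (nn * r)) by apply: mulr_ge0 => //; lra.
lra.
Qed.

Lemma mu_bigU_le d (T : measurableType d) (R : realType) (P : probability T R)
  (I : finType) (Q : pred I) (F : I -> set T) :
  (forall i, measurable (F i)) ->
  (P (\big[setU/set0]_(i | Q i) F i) <= \sum_(i | Q i) P (F i))%E.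
Proof.
move=> mF.
pose K := fun (A : set T) (x : \bar R) => measurable A /\ (P A <= x)%E.
suff : K (\big[setU/set0]_(i | Q i) F i) (\sum_(i | Q i) P (F i)) by case.
apply: (big_rec2 K).
  by split; [exact: measurable0 | rewrite measure0].
move=> i A x Qi [mA hA]; split; first exact: measurableU.
apply: le_trans (measureU2 _ (mF i) mA) _.
by apply: leeD.
Qed.

Theorem lemma4 (R : realType)
  (dO : measure_display) (Omega : measurableType dO) (P : probability Omega R)
  (dX : measure_display) (X : measurableType dX)
  (G : set (X -> R))
  (p : R) (n : nat)
  (X0 : Omega -> X) (Y0 : Omega -> R)
  (Xs : 'I_n -> Omega -> X) (Ys : 'I_n -> Omega -> R)
  (eps delta : R) :
  (forall g, G g -> measurable_fun setT g /\ (forall x, g x = 1 \/ g x = -1)) ->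
  0 < p < 1 ->
  measurable_fun setT X0 -> measurable_fun setT Y0 ->
  (forall w, Y0 w = 1 \/ Y0 w = -1) ->
  (forall i, measurable_fun setT (Xs i)) ->
  (forall i, measurable_fun setT (Ys i)) ->
  (forall i w, Ys i w = 1 \/ Ys i w = -1) ->
  mutually_independent P (fun i w => (Xs i w, Ys i w)) ->
  (forall i, same_law P (fun w => (Xs i w, Ys i w)) (fun w => (X0 w, Y0 w))) ->
  let q := fine (P [set w | Y0 w = 1]) in
  0 < eps < 1 / 2 ->
  eps < q < 1 - eps ->
  0 < delta < 1 ->
  2 * ln (2 / delta) / eps ^+ 2 <= n%:R ->
  exists A : set Omega, measurable A /\ ((1 - delta)%:E <= P A)%E /\
    forall w, A w -> forall g, G g ->
      `| Rtilde_what p (fun i => Xs i w) (fun i => Ys i w) g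
         - Rtilde_w p q (fun i => Xs i w) (fun i => Ys i w) g |
      <= 2 * (2 * p + 1) / eps ^+ 2 * Num.sqrt (ln (2 / delta) / (2 * n%:R)).
Proof.
move=> HG hp mX0 mY0 hY0 mXs mYs hYs hind hlaw q heps hq hdelta hn.
move: heps hq hdelta => /andP[e0 e1] /andP[qe q1e] /andP[d0 d1].
have q0 : 0 < q by lra.
have q1 : q < 1 by lra.
set L := ln (2 / delta).
have L0 : 0 < L.
  apply: ln_gt0; rewrite ltr_pdivlMr // mul1r.
  clear -d1; lra.
have nR : 0 < n%:R :> R.
  apply: lt_le_trans hn; apply: divr_gt0; [apply: mulr_gt0 => //; exact: L0| exact: exprn_gt0].
set t := Num.sqrt (L / (2 * n%:R)).
have t0 : 0 <= t by exact: sqrtr_ge0.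
have t2 : t ^+ 2 = L / (2 * n%:R).
  by rewrite /t sqr_sqrtr // divr_ge0 //; lra.
set s := 2 * t / eps.
have s0 : 0 <= s by rewrite /s; apply: divr_ge0; lra.
have h1n : ((-1 : R) == 1) = false by apply/eqP => h; lra.
pose sg (c : bool) : R := if c then 1 else -1.
pose E := fun (b : {ffun 'I_n -> bool}) =>
  \bigcap_(i in [set: 'I_n]) ((fun i w => (Xs i w, Ys i w)) i @^-1` (setT `*` [set sg (b i)])).
have mB : forall c, measurable (setT `*` [set sg c] : set (X * R)).
  by move=> c; apply: measurableX => //; exact: measurable_set1.
have mE : forall b, measurable (E b).
  move=> b; apply: fin_bigcap_measurable; first exact: finite_finset.
  move=> i _; have := measurable_fun_pair (mXs i) (mYs i) measurableT (mB (b i)).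
  by rewrite setTI.
pose bad := fun b : {ffun 'I_n -> bool} => n%:R * s < `|@cnt R n true b - n%:R * q|.
pose U := \big[setU/set0]_(b | bad b) E b.
have mU : measurable U by apply: bigsetU_measurable => b _; exact: mE.
exists (~` U); split; first exact: measurableC.
split.
  have mY1 : measurable [set w | Y0 w = 1].
    by have := mY0 measurableT _ (measurable_set1 1); rewrite setTI.
  have hPq : P [set w | Y0 w = 1] = q%:E by rewrite /q fineK // fin_num_measure.
  have hPE : forall b, P (E b) = (@wt R n q true b)%:E.
    move=> b; rewrite -(fineK (fin_num_measure P _ (mE b))); congr EFin.
    transitivity (\prod_(i < n) fine (P ((fun i w => (Xs i w, Ys i w)) i @^-1` (setT `*` [set sg (b i)])))).
      exact: (hind (fun i => setT `*` [set sg (b i)]) (fun i => mB (b i))).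
    apply: eq_bigr => i _.
    rewrite (hlaw i _ (mB (b i))).
    case: (b i) => /=.
      have -> : (fun w => (X0 w, Y0 w)) @^-1` (setT `*` [set sg true]) = [set w | Y0 w = 1].
        by apply/seteqP; split => w /=; [case|split].
      by rewrite hPq.
    have -> : (fun w => (X0 w, Y0 w)) @^-1` (setT `*` [set sg false]) = ~` [set w | Y0 w = 1].
      apply/seteqP; split => w /=.
        by case => _ ->; apply/eqP; rewrite h1n.
      by move=> h; split => //; case: (hY0 w).
    by rewrite probability_setC // hPq.
  have q01 : 0 <= q <= 1 by apply/andP; split; lra.
  have hsum : \sum_(b | bad b) @wt R n q true b <= delta.
    case: (leP s 2) => hs2; last first.
      rewrite big_pred0; first by lra.
      move=> b; apply/negbTE; rewrite /bad -leNgt.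
      have c0 := @cnt_ge0 R n true b; have c1 := @cnt_le R n true b.
      have h1 : n%:R * q <= n%:R by rewrite ler_piMr //; lra.
      have h2 : n%:R * 2 <= n%:R * s by rewrite ler_pM2l //; lra.
      have h3 : 0 <= n%:R * q by rewrite mulr_ge0 //; lra.
      rewrite ler_norml; apply/andP; split; lra.
    have s02 : 0 <= s <= 2 by apply/andP; split.
    have q01' : 0 <= 1 - q <= 1 by apply/andP; split; lra.
    have hup := @tail R n q s true q01 s02.
    have hlo := @tail R n (1 - q) s false q01' s02.
    set e := expR (- (n%:R * s ^+ 2 / 8)) in hup hlo.
    have he : e <= delta / 2.
      have hs2e : n%:R * s ^+ 2 / 8 = L / (4 * eps ^+ 2).
        rewrite /s expr_div_n exprMn t2; field.
        by rewrite !gt_eqF.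
      have hL : L <= L / (4 * eps ^+ 2).
        rewrite ler_pdivlMr; last by apply: mulr_gt0 => //; exact: exprn_gt0.
        have : 4 * eps ^+ 2 <= 1 by nra.
        nra.
      rewrite /e hs2e.
      have -> : delta / 2 = expR (- L).
        by rewrite expRN lnK ?invf_div // posrE divr_gt0.
      by rewrite ler_expR lerN2.
    apply: le_trans (_ : _ <= e + e) _; last by lra.
    apply: le_trans (lerD hup hlo).
    rewrite [X in _ <= _ + X](eq_bigr (fun b => @wt R n q true b)); last by move=> b _; rewrite wt_swap.
    rewrite [X in X <= _]big_mkcond [X in _ <= X + _]big_mkcond [X in _ <= _ + X]big_mkcond.
    rewrite -big_split /=; apply: ler_sum => b _.
    rewrite cnt_false.
    have w0 := @wt_ge0 R n q true b q01.
    rewrite /bad.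
    set c := cnt R n true b.
    case: ifP => hb; last first.
      by case: ifP => _; case: ifP => _; lra.
    move: hb; rewrite ltr_normr => /orP[] hb.
      have -> : (n%:R * q + n%:R * s < c) = true by apply/idP; lra.
      by case: ifP => _; lra.
    have -> : (n%:R * (1 - q) + n%:R * s < n%:R - c) = true by apply/idP; lra.
    by case: ifP => _; lra.
  have hU : (P U <= delta%:E)%E.
    have hb := @mu_bigU_le _ _ _ P _ bad E mE.
    apply: le_trans hb _.
    rewrite (eq_bigr (fun b => (@wt R n q true b)%:E)); last by move=> b _; exact: hPE.
    by rewrite sumEFin lee_fin.
  rewrite probability_setC //.
  rewrite -(fineK (fin_num_measure P _ mU)) in hU *.
  rewrite lee_fin in hU; rewrite -EFinB lee_fin; lra.
move=> w Uw g Gg.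
pose beta : {ffun 'I_n -> bool} := [ffun i => Ys i w == 1].
have wE : E beta w.
  move=> i _ /=; split => //; rewrite /sg ffunE.
  by case: (hYs i w) => ->; rewrite ?eqxx ?h1n.
have nb : ~~ bad beta.
  apply/negP => hb; apply: Uw; rewrite /U (bigD1 beta) //=; by left.
have hN : @cnt R n true beta = npos (fun i => Ys i w).
  rewrite /npos big_mkcond; apply: eq_bigr => i _; rewrite ffunE.
  by case: (Ys i w == 1).
move: nb; rewrite /bad -leNgt hN => hd.
set N := npos (fun i => Ys i w) in hd *.
set Sp := Spos (fun i => Xs i w) (fun i => Ys i w) g.
set Sn := Sneg (fun i => Xs i w) (fun i => Ys i w) g.
have hnN : n%:R = N + \sum_(i < n | Ys i w == -1) (1 : R).
  rewrite -[LHS](iter_addr_0 n 1) -big_const_ord (bigID (fun i => Ys i w == 1)) /=.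
  congr (_ + _); apply: eq_bigl => i.
  by case: (hYs i w) => ->; rewrite ?eqxx ?h1n // eq_sym h1n.
have Sp0 : 0 <= Sp by apply: sumr_ge0 => i _; exact: ler0n.
have SpN : Sp <= N by apply: ler_sum => i _; case: (g (Xs i w) == -1).
have Sn0 : 0 <= Sn by apply: sumr_ge0 => i _; exact: ler0n.
have SnN : Sn <= n%:R - N.
  have -> : n%:R - N = \sum_(i < n | Ys i w == -1) (1 : R) by rewrite hnN addrC addKr.
  by apply: ler_sum => i _; case: (g (Xs i w) == 1).
rewrite /Rtilde_what /Rtilde_w /nneg -/N -/Sp -/Sn.
have -> : 2 * p / N * Sp + 1 / (n%:R - N) * Sn
   - (2 * p / q * (1 / n%:R) * Sp + 1 / (1 - q) * (1 / n%:R) * Sn)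
   = (2 * p / N * Sp - 2 * p / q * (1 / n%:R) * Sp)
   + (1 / (n%:R - N) * Sn - 1 / (1 - q) * (1 / n%:R) * Sn) by ring.
apply: le_trans (ler_normD _ _) _.
have p0 : 0 <= 2 * p by move: hp => /andP[? ?]; lra.
have b1 := @term_bound R (2 * p) Sp N n%:R q eps s p0 Sp0 SpN nR e0 (ltW qe) hd.
have hd' : `|n%:R - N - n%:R * (1 - q)| <= n%:R * s.
  by rewrite (_ : n%:R - N - n%:R * (1 - q) = - (N - n%:R * q)) ?normrN //; ring.
have b2 := @term_bound R 1 Sn (n%:R - N) n%:R (1 - q) eps s ler01 Sn0 SnN nR e0
  (ltW (_ : eps < 1 - q)) hd'.
apply: le_trans (lerD b1 (b2 _)) _; first lra.
rewrite /s le_eqVlt; apply/orP; left; apply/eqP; field.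
by rewrite gt_eqF.
Qed.
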